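(* Let $L$ be a finite-dimensional simple regular Lie algebra of rank $1$ over an infinite field $K$, admitting a nondegenerate symmetric invariant bilinear form. Then every element of $L$ is a commutator, i.e. for every $x\in L$ there exist $y,z\in L$ with $x=[y,z]$.
   Context: For $x\in L$ write $\chi_{\operatorname{ad} x}(t)=\det(t-\operatorname{ad}x)=\sum_{i}a_i(x)t^i$; the rank $\operatorname{rk}L$ is the minimal $r$ with $a_r(x)\neq0$ for some $x$; $x$ is regular if $a_{\operatorname{rk}L}(x)\neq 0$; $L$ is regular if every nonzero element is regular. A bilinear form is invariant if $\langle[x,y],z\rangle=\langle x,[y,z]\rangle$ for all $x,y,z$. *)

(* Defs.v *)
From HB Require Import structures.
From mathcomp Require Import all_boot all_order all_algebra.
Set Implicit Arguments. Unset Strict Implicit. Unset Printing Implicit Defensive.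
Import Order.TTheory GRing.Theory Num.Theory.
Local Open Scope ring_scope.

Section Lie.
Variables (K : fieldType) (L : vectType K).

Definition lie_bracket (br : L -> L -> L) : Prop :=
  [/\ (forall (a : K) x y z, br (a *: x + y) z = a *: br x z + br y z),
      (forall (a : K) x y z, br x (a *: y + z) = a *: br x y + br x z),
      (forall x, br x x = 0) &
      (forall x y z, br x (br y z) + br y (br z x) + br z (br x y) = 0)].

(* Matrix of ad x = [x, -] w.r.t. the basis vbasis fullv of L
   (br x is linear by lie_bracket, so linfun (br x) is ad x). *)
Definition ad_mx (br : L -> L -> L) (x : L) : 'M[K]_(\dim {:L}) :=
  passmx.mxof (vbasis fullv) (vbasis fullv) (linfun (br x)).

Definition ad_coef (br : L -> L -> L) (i : nat) (x : L) : K :=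
  (char_poly (ad_mx br x))`_i.

Definition lie_rank (br : L -> L -> L) (r : nat) : Prop :=
  (exists x, ad_coef br r x != 0) /\
  (forall i x, (i < r)%N -> ad_coef br i x = 0).

Definition regular_elt (br : L -> L -> L) (x : L) : Prop :=
  forall r, lie_rank br r -> ad_coef br r x != 0.

Definition regular_lie (br : L -> L -> L) : Prop :=
  forall x : L, x != 0 -> regular_elt br x.

Definition lie_ideal (br : L -> L -> L) (I : {vspace L}) : Prop :=
  forall x y, y \in I -> br x y \in I.

Definition simple_lie (br : L -> L -> L) : Prop :=
  (exists x y, br x y != 0) /\
  (forall I : {vspace L}, lie_ideal br I -> I = 0%VS \/ I = fullv).

Definition nondeg_sym_invariant_form (br : L -> L -> L) (B : L -> L -> K) : Prop :=
  [/\ (forall (a : K) x y z, B (a *: x + y) z = a * B x z + B y z),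
      (forall x y, B x y = B y x),
      (forall x y z, B (br x y) z = B x (br y z)) &
      (forall x, (forall y, B x y = 0) -> x = 0)].

End Lie.

Definition infinite_field (K : fieldType) : Prop :=
  forall s : seq K, exists x : K, x \notin s.

(* Main.v *)
Require Import Defs.
From HB Require Import structures.
From mathcomp Require Import all_boot all_order all_algebra.
From mathcomp Require Import fingroup perm zify.
Import GRing.Theory.
Local Open Scope ring_scope.

Lemma cp_zero_rows (R : comNzRingType) n (N : 'M[R]_n) (i0 i1 : 'I_n) :
  i0 != i1 -> row i0 N = 0 -> row i1 N = 0 -> (char_poly N)`_1 = 0.
Proof.
move=> ne r0 r1.
have ent : forall i j, row i N = 0 -> char_poly_mx N i j = 'X *+ (i == j).
  move=> i j ri; rewrite !mxE.
  have -> : N i j = 0 by have := congr1 (fun M : 'rV_n => M 0 j) ri; rewrite !mxE.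
  by rewrite subr0.
rewrite /char_poly /determinant coef_sum big1 // => s _.
have [/eqP s0|s0] := boolP (s i0 == i0); last first.
  rewrite (bigD1 i0) //= ent // eq_sym (negPf s0) mulr0n mul0r mulr0.
  by rewrite coef0.
have [/eqP s1|s1] := boolP (s i1 == i1); last first.
  rewrite (bigD1 i1) //= (ent i1) // eq_sym (negPf s1) mulr0n mul0r mulr0.
  by rewrite coef0.
rewrite (bigD1 i0) //= (bigD1 i1) /=; last by rewrite eq_sym.
rewrite ent // ent // s0 s1 !eqxx !mulr1n.
set r := \prod_(_ | _) _.
by rewrite mulrCA [_ * ('X * r)]mulrCA mulrA coefXM /= -!mulrA coefXM.
Qed.

Lemma cp_conj (F : fieldType) n (A P : 'M[F]_n) : P \in unitmx ->
  char_poly (P *m A *m invmx P) = char_poly A.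
Proof.
move=> uP.
set mP := map_mx polyC P; set mQ := map_mx polyC (invmx P).
have h1 : mP *m mQ = 1%:M by rewrite -map_mxM mulmxV // map_mx1.
have h2 : mQ *m mP = 1%:M by rewrite -map_mxM mulVmx // map_mx1.
rewrite /char_poly.
have -> : char_poly_mx (P *m A *m invmx P) = mP *m char_poly_mx A *m mQ.
  rewrite /char_poly_mx !map_mxM mulmxBr mulmxBl -/mP -/mQ.
  by rewrite scalar_mxC -(mulmxA _%:M) h1 mulmx1.
rewrite !det_mulmx mulrC mulrA -det_mulmx h2 det1 mul1r //.
Qed.

Lemma cp_low_rank (F : fieldType) n (A : 'M[F]_n) :
  (\rank A + 2 <= n)%N -> (char_poly A)`_1 = 0.
Proof.
move=> hr.
have uL : col_ebase A \in unitmx := col_ebase_unit A.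
rewrite -(@cp_conj F n A (invmx (col_ebase A))) ?unitmx_inv // invmxK.
have -> : invmx (col_ebase A) *m A *m col_ebase A =
    pid_mx (\rank A) *m (row_ebase A *m col_ebase A).
  by rewrite -{2}(mulmx_ebase A) !mulmxA mulVmx // mul1mx.
have h1 : (n - 2 < n)%N by lia.
have h2 : (n - 1 < n)%N by lia.
have zr : forall i : 'I_n, (\rank A <= i)%N ->
    row i (pid_mx (\rank A) *m (row_ebase A *m col_ebase A)) = 0.
  move=> i hi; rewrite row_mul.
  have -> : row i (pid_mx (\rank A) : 'M[F]_n) = 0.
    by apply/rowP => j; rewrite !mxE ltnNge hi andbF.
  by rewrite mul0mx.
apply: (@cp_zero_rows _ n _ (Ordinal h1) (Ordinal h2)).
- by rewrite -(inj_eq val_inj) /=; apply/eqP; lia.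
- by apply: zr => /=; lia.
- by apply: zr => /=; lia.
Qed.

Lemma linfunE' (K : fieldType) (L : vectType K) (f : L -> L) (hf : linear f) u :
  linfun f u = f u.
Proof.
pose g : {linear L -> L} :=
  HB.pack f (GRing.isSemilinear.Build K L L _ f (GRing.semilinear_linear hf)).
exact: (lfunE g u).
Qed.

Lemma dbl0 (V : zmodType) (v : V) : v = v + v -> v = 0.
Proof. by move=> h; apply: (@addrI _ v); rewrite addr0 -h. Qed.

Theorem lemma12 (K : fieldType) (L : vectType K) (br : L -> L -> L) (B : L -> L -> K) :
  infinite_field K ->
  lie_bracket br ->
  simple_lie br ->
  regular_lie br ->
  lie_rank br 1 ->
  nondeg_sym_invariant_form br B ->
  forall x : L, exists y z : L, x = br y z.
Proof.
move=> _ [brl brr bra _] [[a [b nab]] _] reg rk1 [Bl Bsym Binv Bnd] x.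
have br0l : forall z, br 0 z = 0.
  move=> z; have := brl 1 0 0 z; rewrite !scale1r ?scaler0 addr0; exact: dbl0.
have br0r : forall z, br z 0 = 0.
  move=> z; have := brr 1 z 0 0; rewrite !scale1r ?scaler0 addr0 ; exact: dbl0.
have B0l : forall z, B 0 z = 0.
  move=> z; have := Bl 1 0 0 z; rewrite mul1r ?scaler0 addr0 ; exact: dbl0.
have brZr : forall c u v, br u (c *: v) = c *: br u v.
  by move=> c u v; have := brr c u v 0; rewrite !addr0 br0r addr0.
have BZl : forall c u z, B (c *: u) z = c * B u z.
  by move=> c u z; have := Bl c u 0 z; rewrite !addr0 B0l addr0.
have BDl : forall u v z, B (u + v) z = B u z + B v z.
  by move=> u v z; have := Bl 1 u v z; rewrite scale1r mul1r.
have anz : a != 0 by apply: contraNneq nab => ->; rewrite br0l.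
have [y [ynz yx]] : exists y, y != 0 /\ B y x = 0.
  case: (eqVneq (B a x) 0) => hax; first by exists a.
  exists (B b x *: a - B a x *: b); split.
    apply: contraNneq nab => /eqP; rewrite subr_eq0 => /eqP h.
    have -> : b = ((B a x)^-1 * B b x) *: a.
      by rewrite -scalerA h scalerA mulVf // scale1r.
    by rewrite brZr bra scaler0.
  by rewrite -scaleNr BDl !BZl mulNr mulrC subrr.
set n := \dim {:L}.
set e := vbasis (fullv : {vspace L}).
have eB : basis_of fullv e := vbasisP fullv.
set M := ad_mx br y.
have hrk : (n <= \rank M + 1)%N.
  have := reg y ynz 1 rk1; rewrite /ad_coef -/M.
  case: (leqP (\rank M + 2) n) => [h|h]; first by rewrite cp_low_rank ?eqxx.
  by move=> _; lia.
have lin : linear (br y) by move=> c u v; apply: brr.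
have adE : forall u, u *m M = passmx.rVof e (br y (passmx.vecof e u)).
  by move=> u; rewrite /M /ad_mx passmx.mul_mxof linfunE'.
have rVinj := can_inj (passmx.rVofK eB).
case: (boolP (passmx.rVof e x <= M)%MS) => [/submxP[D hD]|nrx].
  by exists y, (passmx.vecof e D); apply: rVinj; rewrite hD adE.
exfalso; move/negP: ynz; apply; apply/eqP; apply: Bnd => z.
have hfull : row_full (M + passmx.rVof e x)%MS.
  rewrite /row_full eqn_leq rank_leq_col /=.
  have : (M < M + passmx.rVof e x)%MS.
    rewrite ltmxE addsmxSl /=; apply/negP => h.
    by apply: (negP nrx); apply: submx_trans h; apply: addsmxSr.
  rewrite ltmxErank => /andP[_ hlt]; lia.
have := submx_full (passmx.rVof e z) hfull.
case/sub_addsmxP => [[u1 u2]] /= hz.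
have hz' : z = br y (passmx.vecof e u1) + u2 0 0 *: x.
  apply: rVinj; rewrite addrC passmx.rVof_linear -adE hz addrC.
  by rewrite {1}[u2]mx11_scalar mul_scalar_mx.
rewrite hz' Bsym BDl BZl [B x y]Bsym yx mulr0 addr0 Bsym.
by rewrite -Binv bra B0l.
Qed.
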